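(* Fix $m,n\in\mathbb N$ and convex bodies $K_0,\dots,K_m\subseteq\mathbb R^n$ containing the origin in their interiors; $\mathscr K=(K_0,\dots,K_m)$. Define \[D^{m,\circ}_2(\mathscr K)=\Big\{(x_1,\dots,x_m)\in\mathbb R^{nm}:\ h_{K_0}\Big(\sum_{i=1}^m x_i\Big)^2+\sum_{i=1}^m h_{-K_i}(x_i)^2\le1\Big\}.\] Then $(m+1)^{-1/2}D^{m,\circ}_2(\mathscr K)\subseteq D^{m,\circ}(\mathscr K)$, and equality holds if and only if $m=1$ and $K_0=-K_1$.
   Context: $h_L(u)=\sup_{y\in L}\langle u,y\rangle$ is the support function. $D^m(\mathscr K)=\{(x_1,\dots,x_m)\in(\mathbb R^n)^m: K_0\cap\bigcap_{i=1}^m(K_i+x_i)\neq\emptyset\}$ and $D^{m,\circ}(\mathscr K)$ is its polar $\{y:\langle y,x\rangle\le1\ \forall x\in D^m(\mathscr K)\}$. *)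

(* Defs.v *)
From HB Require Import structures.
From mathcomp Require Import all_boot all_order all_algebra.
From mathcomp Require Import all_classical all_reals all_analysis.
Set Implicit Arguments. Unset Strict Implicit. Unset Printing Implicit Defensive.
Import Order.TTheory GRing.Theory Num.Theory.
Import numFieldNormedType.Exports.
Local Open Scope classical_set_scope.
Local Open Scope ring_scope.

Definition dotv {R : realType} {n : nat} (u v : 'rV[R]_n) : R :=
  \sum_(j < n) u ord0 j * v ord0 j.

(* inner product on (R^n)^m, points are m-tuples of vectors *)
Definition dotvm {R : realType} {m n : nat} (x y : 'I_m -> 'rV[R]_n) : R :=
  \sum_(i < m) dotv (x i) (y i).

Definition convex_body0 {R : realType} {n : nat} (K : set 'rV[R]_n) : Prop :=
  [/\ (forall x y : 'rV[R]_n, K x -> K y -> forall t : R, 0 <= t <= 1 ->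
         K (t *: x + (1 - t) *: y)),
      compact K &
      interior K (0 : 'rV[R]_n)].

Definition supp_fun {R : realType} {n : nat} (L : set 'rV[R]_n) (u : 'rV[R]_n) : R :=
  sup [set dotv u y | y in L].

Definition setneg {R : realType} {n : nat} (L : set 'rV[R]_n) : set 'rV[R]_n :=
  [set - y | y in L].

Definition settr {R : realType} {n : nat} (L : set 'rV[R]_n) (x : 'rV[R]_n) : set 'rV[R]_n :=
  [set y + x | y in L].

Definition Dm {R : realType} {m n : nat} (K0 : set 'rV[R]_n) (Ks : 'I_m -> set 'rV[R]_n)
  : set ('I_m -> 'rV[R]_n) :=
  [set x | exists z : 'rV[R]_n, K0 z /\ forall i : 'I_m, settr (Ks i) (x i) z].

Definition polar_m {R : realType} {m n : nat} (D : set ('I_m -> 'rV[R]_n))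
  : set ('I_m -> 'rV[R]_n) :=
  [set y | forall x, D x -> dotvm y x <= 1].

Definition Dm_polar {R : realType} {m n : nat} (K0 : set 'rV[R]_n) (Ks : 'I_m -> set 'rV[R]_n) :=
  polar_m (Dm K0 Ks).

Definition Dm_polar2 {R : realType} {m n : nat} (K0 : set 'rV[R]_n) (Ks : 'I_m -> set 'rV[R]_n)
  : set ('I_m -> 'rV[R]_n) :=
  [set x | supp_fun K0 (\sum_(i < m) x i) ^+ 2
           + \sum_(i < m) supp_fun (setneg (Ks i)) (x i) ^+ 2 <= 1].

Definition scale_m {R : realType} {m n : nat} (c : R) (D : set ('I_m -> 'rV[R]_n))
  : set ('I_m -> 'rV[R]_n) :=
  [set (fun i => c *: x i) | x in D].

(* Main.v *)
Require Import Defs.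
From HB Require Import structures.
From mathcomp Require Import all_boot all_order all_algebra.
From mathcomp Require Import all_classical all_reals all_analysis.
From mathcomp Require Import ring lra.
Import Order.TTheory GRing.Theory Num.Theory.
Import numFieldNormedType.Exports.
Local Open Scope classical_set_scope.
Local Open Scope ring_scope.
Section CS.
Variable R : realFieldType.

Lemma sq_expand N (a : 'I_N -> R) (x : R) :
  \sum_(i < N) (x - a i) ^+ 2 =
  N%:R * x ^+ 2 - 2 * x * (\sum_(i < N) a i) + \sum_(i < N) a i ^+ 2.
Proof.
have -> : \sum_(i < N) (x - a i) ^+ 2 =
   \sum_(i < N) (x ^+ 2 - 2 * x * a i + a i ^+ 2).
  by apply: eq_bigr => i _; ring.
rewrite big_split /= big_split /= sumrN -mulr_sumr sumr_const card_ord.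
by rewrite -mulr_sumr -mulr_natr; ring.
Qed.

Lemma cs_sum N (a : 'I_N -> R) :
  (\sum_(i < N) a i) ^+ 2 <= N%:R * \sum_(i < N) a i ^+ 2.
Proof.
elim: N a => [|N IH] a; first by rewrite !big_ord0 expr0n /= mul0r.
rewrite !big_ord_recr /=.
set a' := fun i : 'I_N => a (widen_ord (leqnSn N) i).
have h1 := IH a'.
have h2 : 0 <= \sum_(i < N) (a ord_max - a' i) ^+ 2 by apply: sumr_ge0 => i _; rewrite sqr_ge0.
rewrite sq_expand in h2.
rewrite -/(a' _).
have -> : \sum_(i < N) a (widen_ord (leqnSn N) i) = \sum_(i < N) a' i by [].
have -> : \sum_(i < N) a (widen_ord (leqnSn N) i) ^+ 2 = \sum_(i < N) a' i ^+ 2 by [].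
rewrite -natr1.
set S := \sum_(i < N) a' i in h1 h2 *.
set Q := \sum_(i < N) a' i ^+ 2 in h1 h2 *.
set x := a ord_max in h2 *.
nra.
Qed.

Lemma cs_sum1 N (b : R) (a : 'I_N -> R) :
  (b + \sum_(i < N) a i) ^+ 2 <= N.+1%:R * (b ^+ 2 + \sum_(i < N) a i ^+ 2).
Proof.
have h1 := cs_sum _ a.
have h2 : 0 <= \sum_(i < N) (b - a i) ^+ 2 by apply: sumr_ge0 => i _; rewrite sqr_ge0.
rewrite sq_expand in h2.
rewrite -natr1.
set S := \sum_(i < N) a i in h1 h2 *.
set Q := \sum_(i < N) a i ^+ 2 in h1 h2 *.
nra.
Qed.
End CS.

Section S.
Variables (R : realType) (n : nat).
Implicit Types (u v y z : 'rV[R]_n).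

Lemma dotvC u v : dotv u v = dotv v u.
Proof. by apply: eq_bigr => j _; rewrite mulrC. Qed.

Lemma dotvDl u v y : dotv (u + v) y = dotv u y + dotv v y.
Proof. by rewrite /dotv -big_split; apply: eq_bigr => j _; rewrite mxE mulrDl. Qed.

Lemma dotvZl (c : R) u y : dotv (c *: u) y = c * dotv u y.
Proof. by rewrite /dotv mulr_sumr; apply: eq_bigr => j _; rewrite mxE mulrA. Qed.

Lemma dotvNl u y : dotv (- u) y = - dotv u y.
Proof. by rewrite -scaleN1r dotvZl mulN1r. Qed.

Lemma dotvDr u v y : dotv y (u + v) = dotv y u + dotv y v.
Proof. by rewrite dotvC dotvDl !(dotvC y). Qed.
Lemma dotvZr (c : R) u y : dotv y (c *: u) = c * dotv y u.
Proof. by rewrite dotvC dotvZl dotvC. Qed.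
Lemma dotvNr u y : dotv y (- u) = - dotv y u.
Proof. by rewrite dotvC dotvNl dotvC. Qed.
Lemma dotvBr u v y : dotv y (u - v) = dotv y u - dotv y v.
Proof. by rewrite dotvDr dotvNr. Qed.
Lemma dotvBl u v y : dotv (u - v) y = dotv u y - dotv v y.
Proof. by rewrite dotvDl dotvNl. Qed.
Lemma dotv0l y : dotv 0 y = 0.
Proof. by rewrite -(scale0r 0) dotvZl mul0r. Qed.

Lemma dotv_suml (m : nat) (x : 'I_m -> 'rV[R]_n) y :
  dotv (\sum_i x i) y = \sum_i dotv (x i) y.
Proof.
by apply: (big_morph (fun x => dotv x y)) => [a b|]; rewrite ?dotvDl ?dotv0l.
Qed.

Lemma dotv_ge0 u : 0 <= dotv u u.
Proof. by apply: sumr_ge0 => j _; rewrite -expr2 sqr_ge0. Qed.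

Lemma dotv_gt0 u : u != 0 -> 0 < dotv u u.
Proof.
move=> u0; have [j uj] : exists j, u ord0 j != 0.
  apply/existsP; apply: contraNT u0 => /existsPn H; apply/eqP/rowP => j.
  by rewrite mxE; apply/eqP; move: (H j); rewrite negbK.
rewrite /dotv (bigD1 j) //=.
have h2 : 0 <= \sum_(i < n | i != j) u ord0 i * u ord0 i.
  by apply: sumr_ge0 => k _; rewrite -expr2 sqr_ge0.
have h1 : 0 < u ord0 j * u ord0 j.
  by rewrite lt_neqAle eq_sym -expr2 sqr_ge0 andbT sqrf_eq0.
lra.
Qed.

Lemma dotv_cont (f g : 'rV[R]_n -> 'rV[R]_n) :
  continuous f -> continuous g -> continuous (fun y => dotv (f y) (g y)).
Proof.
move=> cf cg; rewrite /dotv.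
apply: continuous_big => [|j _].
  exact: add_continuous.
move=> y; apply: continuousM.
  exact: (continuous_comp (cf y) (@coord_continuous _ _ _ ord0 j (f y))).
exact: (continuous_comp (cg y) (@coord_continuous _ _ _ ord0 j (g y))).
Qed.


Lemma supp_max (K : set 'rV[R]_n) u : compact K -> K !=set0 ->
  exists c, [/\ K c, (forall y, K y -> dotv u y <= dotv u c) & supp_fun K u = dotv u c].
Proof.
move=> cK K0.
have cf : continuous (fun y => dotv u y) :=
  @dotv_cont (fun=> u) id (@cst_continuous _ _ u) (fun y => cvg_id).
have [c cK' cmax] := @EVT_max_rV R n (fun y => dotv u y) K K0 cK
  (ltac:(exact: continuous_subspaceT)).
have Kc : K c by rewrite -inE.
have ub : forall y, K y -> dotv u y <= dotv u c by move=> y Ky; apply: cmax; rewrite inE.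
exists c; split => //.
apply/le_anti/andP; split.
  by apply: ge_sup; [exists (dotv u c), c | move=> _ [y Ky <-]; exact: ub].
apply: ub_le_sup; last by exists c.
by exists (dotv u c) => _ [y Ky <-]; exact: ub.
Qed.

Lemma supp_ub (K : set 'rV[R]_n) u y : compact K -> K y -> dotv u y <= supp_fun K u.
Proof.
move=> cK Ky; have [c [_ H ->]] := supp_max _ u cK (ex_intro _ y Ky); exact: H.
Qed.

Lemma supp_le (K : set 'rV[R]_n) u b : compact K -> K !=set0 ->
  (forall y, K y -> dotv u y <= b) -> supp_fun K u <= b.
Proof. by move=> cK K0 H; have [c [Kc _ ->]] := supp_max _ u cK K0; exact: H. Qed.

Lemma supp_scale (K : set 'rV[R]_n) (s : R) u : compact K -> K !=set0 -> 0 <= s ->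
  supp_fun K (s *: u) = s * supp_fun K u.
Proof.
move=> cK K0 s0; have [c [Kc H ->]] := supp_max _ u cK K0.
apply/le_anti/andP; split.
  by apply: supp_le => // y Ky; rewrite dotvZl ler_wpM2l // H.
by rewrite -dotvZl; exact: supp_ub.
Qed.

Lemma supp0 (K : set 'rV[R]_n) : compact K -> K !=set0 -> supp_fun K 0 = 0.
Proof. by move=> cK K0; rewrite -(scale0r 0) supp_scale // mul0r. Qed.

Lemma supp_ge0 (K : set 'rV[R]_n) u : compact K -> K 0 -> 0 <= supp_fun K u.
Proof. by move=> cK K0; have := supp_ub _ u _ cK K0; rewrite dotvC dotv0l. Qed.

Lemma supp_neg (K : set 'rV[R]_n) u : supp_fun (setneg K) u = supp_fun K (- u).
Proof.
rewrite /supp_fun; congr sup; apply/seteqP; split => _ [y Ky <-].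
  by case: Ky => k Kk <-; exists k => //; rewrite dotvNr dotvNl.
by exists (- y); [exists y | rewrite dotvNr dotvNl].
Qed.

Lemma supp_gt0 (K : set 'rV[R]_n) u : compact K -> interior K 0 -> u != 0 ->
  0 < supp_fun K u.
Proof.
move=> cK Ki u0.
have H : \forall e \near (0 : R), K (e *: u).
  have : (fun e : R => e *: u) @ (0 : R) --> (0 : R) *: u.
    by apply: cvgZr_tmp; exact: cvg_id.
  rewrite scale0r; exact.
have [d d0 Hd] := (nbhs_ballP _ _).1 H.
have Kd : K ((d / 2) *: u).
  apply: Hd; rewrite /ball /= sub0r normrN gtr0_norm ?divr_gt0 //.
  move: d0 => /= d0; lra.
apply: (lt_le_trans _ (supp_ub _ u _ cK Kd)).
by rewrite dotvZr mulr_gt0 ?divr_gt0 // dotv_gt0.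
Qed.


Lemma dotv_expand u w (t : R) :
  dotv (u - t *: w) (u - t *: w) = dotv u u - 2 * t * dotv u w + t ^+ 2 * dotv w w.
Proof. rewrite !(dotvBl, dotvBr, dotvZl, dotvZr) (dotvC w u); ring. Qed.

Lemma separation (K : set 'rV[R]_n) z :
  (forall x y : 'rV[R]_n, K x -> K y -> forall t : R, 0 <= t <= 1 ->
         K (t *: x + (1 - t) *: y)) ->
  compact K -> K !=set0 -> ~ K z -> exists u, supp_fun K u < dotv u z.
Proof.
move=> Kcvx cK K0 Kz.
have cB : continuous (fun y : 'rV[R]_n => z - y).
  by move=> y; have := @cvgB _ _ _ (nbhs y) _ (fun=> z) id z y (cvg_cst z) cvg_id; exact.
have cf := dotv_cont _ _ cB cB.
have [p pK pmin] := @EVT_min_rV R n _ K K0 cK (ltac:(exact: continuous_subspaceT cf)).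
have Kp : K p by rewrite -inE.
set u := z - p.
have u0 : u != 0 by rewrite subr_eq0; apply/eqP => zp; apply: Kz; rewrite zp.
have key : forall k, K k -> dotv u k <= dotv u p.
  move=> k Kk; rewrite -subr_le0 -dotvBr; set w := k - p.
  rewrite leNgt; apply/negP => a0.
  set a := dotv u w in a0 *; set b := dotv w w.
  have b0 : 0 <= b by exact: dotv_ge0.
  set t := a / (b + a).
  have t0 : 0 < t by rewrite divr_gt0 //; lra.
  have tba : t * (b + a) = a by rewrite /t divfK //; apply/lt0r_neq0; lra.
  have t1 : t <= 1.
    have : t * (b + a) <= 1 * (b + a) by rewrite tba; lra.
    by rewrite ler_pM2r //; lra.
  have Kq := Kcvx k p Kk Kp t (ltac:(apply/andP; split; lra)).
  have := pmin _ (ltac:(rewrite inE; exact: Kq)).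
  have -> : z - (t *: k + (1 - t) *: p) = u - t *: w.
    rewrite /u /w scalerBr scalerBl scale1r.
    by rewrite opprD opprB opprB !addrA addrAC (addrAC z) -!addrA (addrC (t *: p)).
  rewrite -/u dotv_expand -/a -/b => h.
  have h2 : t * (2 * a - t * b) <= 0 by lra.
  have h3 : 2 * a - t * b <= 0.
    by move: h2; rewrite pmulr_rle0.
  nra.
exists u.
have : supp_fun K u <= dotv u p by apply: supp_le.
have : dotv u z - dotv u p = dotv u u by rewrite -dotvBr.
have := dotv_gt0 _ u0; lra.
Qed.

End S.

Section Main.
Variables (R : realType) (m n : nat) (K0 : set 'rV[R]_n) (Ks : 'I_m -> set 'rV[R]_n).
Hypotheses (cK0 : compact K0) (zK0 : K0 0) (cKs : forall i, compact (Ks i))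
  (zKs : forall i, Ks i 0).

Definition hA (y : 'I_m -> 'rV[R]_n) :=
  supp_fun K0 (\sum_i y i) + \sum_i supp_fun (Ks i) (- y i).
Definition hQ (y : 'I_m -> 'rV[R]_n) :=
  supp_fun K0 (\sum_i y i) ^+ 2 + \sum_i supp_fun (Ks i) (- y i) ^+ 2.

Lemma neK0 : K0 !=set0. Proof. by exists 0. Qed.
Lemma neKs i : Ks i !=set0. Proof. by exists 0. Qed.

Lemma D2E x : Dm_polar2 K0 Ks x = (hQ x <= 1).
Proof.
rewrite /Dm_polar2 /hQ /=; congr (_ + _ <= _).
by apply: eq_bigr => i _; rewrite supp_neg.
Qed.

Lemma hA_ge0 y : 0 <= hA y.
Proof.
apply: addr_ge0; first exact: supp_ge0.
by apply: sumr_ge0 => i _; exact: supp_ge0.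
Qed.

Lemma hA_scale (s : R) y : 0 <= s -> hA (fun i => s *: y i) = s * hA y.
Proof.
move=> s0; rewrite /hA -scaler_sumr supp_scale //; last exact: neK0.
rewrite mulrDr mulr_sumr; congr (_ + _); apply: eq_bigr => i _.
by rewrite -scalerN supp_scale //; exact: neKs.
Qed.

Lemma hQ_scale (s : R) y : 0 <= s -> hQ (fun i => s *: y i) = s ^+ 2 * hQ y.
Proof.
move=> s0; rewrite /hQ -scaler_sumr supp_scale //; last exact: neK0.
rewrite mulrDr mulr_sumr exprMn; congr (_ + _); apply: eq_bigr => i _.
by rewrite -scalerN supp_scale ?exprMn //; exact: neKs.
Qed.

Lemma hA_cs y : hA y ^+ 2 <= m.+1%:R * hQ y.
Proof. exact: cs_sum1. Qed.

Lemma polarE y : Dm_polar K0 Ks y <-> hA y <= 1.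
Proof.
split.
  move=> Hy.
  have [z [Kz _ hz]] := supp_max _ _ _ (\sum_i y i) cK0 neK0.
  have /choice [kf Hk] : forall i, exists k, [/\ Ks i k,
      (forall w, Ks i w -> dotv (- y i) w <= dotv (- y i) k) &
      supp_fun (Ks i) (- y i) = dotv (- y i) k].
    by move=> i; exact: supp_max _ _ _ _ (cKs i) (neKs i).
  have Dx : Dm K0 Ks (fun i => z - kf i).
    exists z; split => // i; exists (kf i); first by case: (Hk i).
    by rewrite addrC subrK.
  have := Hy _ Dx; rewrite /dotvm.
  have -> : \sum_i dotv (y i) (z - kf i) = hA y.
    rewrite /hA hz dotv_suml -big_split /=; apply: eq_bigr => i _.
    by case: (Hk i) => _ _ ->; rewrite dotvBr dotvNl.
  done.
move=> hy x [z [Kz Hx]]; rewrite /dotvm.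
apply: le_trans hy; rewrite /hA.
apply: (@le_trans _ _ (\sum_i (dotv (y i) z + supp_fun (Ks i) (- y i)))).
  apply: ler_sum => i _; case: (Hx i) => k Kk <-.
  have := supp_ub _ _ _ (- y i) _ (cKs i) Kk; rewrite dotvNl dotvDr; lra.
rewrite big_split /= -dotv_suml lerD2r; exact: supp_ub.
Qed.


Local Notation cc := ((Num.sqrt (m.+1%:R : R))^-1).

Lemma c_facts : [/\ 0 < cc, cc^-1 ^+ 2 = m.+1%:R & cc ^+ 2 * m.+1%:R = 1].
Proof.
have N0 : (0 : R) < m.+1%:R by rewrite ltr0Sn.
have s0 : 0 < Num.sqrt (m.+1%:R : R) by rewrite sqrtr_gt0.
have s2 : Num.sqrt (m.+1%:R : R) ^+ 2 = m.+1%:R by rewrite sqr_sqrtr // ltW.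
split; first by rewrite invr_gt0.
  by rewrite invrK.
by rewrite exprVn s2 mulVf // gt_eqF.
Qed.

Lemma incl : scale_m cc (Dm_polar2 K0 Ks) `<=` Dm_polar K0 Ks.
Proof.
move=> _ [x Hx <-]; apply/polarE.
have [c0 _ c2] := c_facts.
rewrite hA_scale; last exact: ltW.
have h1 := hA_cs x; have h2 := hA_ge0 x.
move: Hx; rewrite D2E => h3.
set A := hA x in h1 h2 *; set Q := hQ x in h1 h3.
set N := (m.+1%:R : R) in c2 h1.
have hN : 0 <= N by rewrite /N ler0n.
have h4 : (cc * A) ^+ 2 <= 1.
  have h6 := ler_wpM2l (sqr_ge0 cc) h1.
  rewrite exprMn; apply: (le_trans h6).
  by rewrite mulrA c2 mul1r.
have h5 : 0 <= cc * A by apply: mulr_ge0 => //; apply: ltW.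
by rewrite -(@expr_le1 _ 2).
Qed.


Hypothesis iKs : forall i, interior (Ks i) 0.

Lemma key (E : scale_m cc (Dm_polar2 K0 Ks) = Dm_polar K0 Ks) i v :
  m.+1%:R * (supp_fun K0 v ^+ 2 + supp_fun (Ks i) (- v) ^+ 2) <=
  (supp_fun K0 v + supp_fun (Ks i) (- v)) ^+ 2.
Proof.
have [v0|v0] := eqVneq v 0.
  rewrite v0 oppr0 (supp0 _ _ _ cK0 neK0) (supp0 _ _ _ (cKs i) (neKs i)).
  by rewrite addr0 expr0n /= addr0 mulr0.
pose y := fun j : 'I_m => if j == i then v else 0.
have sy : \sum_j y j = v.
  by rewrite (bigD1 i) //= /y eqxx big1 ?addr0 // => j /negbTE ->.
have hAy : hA y = supp_fun K0 v + supp_fun (Ks i) (- v).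
  rewrite /hA sy (bigD1 i) //= /y eqxx big1 ?addr0 // => j /negbTE ->.
  by rewrite oppr0 (supp0 _ _ _ (cKs j) (neKs j)).
have hQy : hQ y = supp_fun K0 v ^+ 2 + supp_fun (Ks i) (- v) ^+ 2.
  rewrite /hQ sy (bigD1 i) //= /y eqxx big1 ?addr0 // => j /negbTE ->.
  by rewrite oppr0 (supp0 _ _ _ (cKs j) (neKs j)) expr0n.
have b0 : 0 < supp_fun (Ks i) (- v).
  by apply: supp_gt0 (cKs i) (iKs i) _; rewrite oppr_eq0.
have a0 : 0 <= supp_fun K0 v by exact: supp_ge0.
set a := supp_fun K0 v in hAy hQy a0 *.
set b := supp_fun (Ks i) (- v) in hAy hQy b0 *.
have A0 : 0 < hA y by rewrite hAy; lra.
set t := (hA y)^-1.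
have t0 : 0 < t by rewrite invr_gt0.
have tA : t * (a + b) = 1 by rewrite -hAy mulVf // gt_eqF.
have : Dm_polar K0 Ks (fun j => t *: y j).
  apply/polarE; rewrite hA_scale; last exact: ltW.
  by rewrite hAy tA.
rewrite -E => -[x Hx Hxy].
have [c0 ci2 _] := c_facts.
have xE : x = (fun j => (cc^-1 * t) *: y j).
  apply: funext => j; have /= h := congr1 (fun f => f j) Hxy.
  by rewrite -scalerA -h scalerA mulVf ?scale1r // gt_eqF.
move: Hx; rewrite D2E xE hQ_scale; last by rewrite mulr_ge0 // ltW // invr_gt0.
rewrite hQy exprMn ci2 => h.
set P := m.+1%:R * (a ^+ 2 + b ^+ 2) in h *.
have -> : P = (a + b) ^+ 2 * (t ^+ 2 * P).
  by rewrite mulrA -exprMn (mulrC (a + b) t) tA expr1n mul1r.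
rewrite -[X in _ <= X]mulr1; apply: ler_wpM2l; first exact: sqr_ge0.
suff -> : t ^+ 2 * P = m.+1%:R * t ^+ 2 * (a ^+ 2 + b ^+ 2) by []. 
rewrite /P; ring.
Qed.

End Main.

Section S2.
Variables (R : realType) (n : nat).

Lemma sets_eq (A B : set 'rV[R]_n) :
  (forall x y : 'rV[R]_n, A x -> A y -> forall t : R, 0 <= t <= 1 ->
         A (t *: x + (1 - t) *: y)) ->
  (forall x y : 'rV[R]_n, B x -> B y -> forall t : R, 0 <= t <= 1 ->
         B (t *: x + (1 - t) *: y)) ->
  compact A -> compact B -> A !=set0 -> B !=set0 ->
  (forall v, supp_fun A v = supp_fun B (- v)) -> A = setneg B.
Proof.
move=> cvA cvB cA cB nA nB h; apply/seteqP; split.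
  move=> z Az; have [Bz|Bz] := pselect (B (- z)).
    by exists (- z) => //; rewrite opprK.
  have [u hu] := separation _ _ B (- z) cvB cB nB Bz.
  have := supp_ub _ _ A (- u) z cA Az.
  rewrite h opprK dotvNl -dotvNr; lra.
move=> _ [k Bk <-]; have [Ak|Ak] := pselect (A (- k)) => //.
have [u hu] := separation _ _ A (- k) cvA cA nA Ak.
have := supp_ub _ _ B (- u) k cB Bk.
rewrite -h dotvNl -dotvNr; lra.
Qed.

End S2.

Theorem proposition5p8 (R : realType) (m n : nat)
  (K0 : set 'rV[R]_n) (Ks : 'I_m -> set 'rV[R]_n) :
  (1 <= m)%N -> (1 <= n)%N ->
  convex_body0 K0 -> (forall i, convex_body0 (Ks i)) ->
  scale_m (Num.sqrt (m.+1%:R))^-1 (Dm_polar2 K0 Ks) `<=` Dm_polar K0 Ks /\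
  (scale_m (Num.sqrt (m.+1%:R))^-1 (Dm_polar2 K0 Ks) = Dm_polar K0 Ks <->
     (m = 1%N /\ forall i : 'I_m, K0 = setneg (Ks i))).
Proof.
move=> m1 n1 [cv0 cK0 iK0] cbs.
have zK0 : K0 0 by exact: interior_subset.
have cKs : forall i, compact (Ks i) by move=> i; case: (cbs i).
have cvs : forall i, (forall x y : 'rV[R]_n, Ks i x -> Ks i y -> forall t : R,
   0 <= t <= 1 -> Ks i (t *: x + (1 - t) *: y)) by move=> i; case: (cbs i).
have iKs : forall i, interior (Ks i) 0 by move=> i; case: (cbs i).
have zKs : forall i, Ks i 0 by move=> i; exact: interior_subset.
have inc := @incl _ _ _ K0 Ks cK0 zK0 cKs zKs.
split => //; split.
  move=> E.
  have K := @key _ _ _ K0 Ks cK0 zK0 cKs zKs iKs E.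
  pose v0 : 'rV[R]_n := const_mx 1.
  have v0n : - v0 != 0.
    rewrite oppr_eq0; apply/negP => /eqP /rowP /(_ (Ordinal n1)).
    by rewrite !mxE => /eqP; rewrite oner_eq0.
  have m1' : m = 1%N.
    apply/eqP; rewrite eqn_leq m1 andbT leqNgt; apply/negP => m2.
    have := K (Ordinal m1) v0.
    have b0 := supp_gt0 _ _ _ _ (cKs (Ordinal m1)) (iKs (Ordinal m1)) v0n.
    have a0 := supp_ge0 _ _ _ v0 cK0 zK0.
    have N3 : (3 : R) <= m.+1%:R by rewrite ler_nat.
    set a := supp_fun K0 v0 in a0 *; set b := supp_fun _ (- v0) in b0 *.
    set N := (m.+1%:R : R) in N3 *.
    move=> h.
    have h1 : 3 * (a ^+ 2 + b ^+ 2) <= N * (a ^+ 2 + b ^+ 2).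
      by apply: ler_wpM2r => //; apply: addr_ge0; apply: sqr_ge0.
    have h3 : 0 < b * b by apply: mulr_gt0.
    have h4 : 0 <= (a - b) * (a - b) by rewrite -expr2 sqr_ge0.
    clear E inc K cbs cvs cv0.
    nra.
  split => // i.
  apply: sets_eq; [exact: cv0 | exact: cvs | exact: cK0 | exact: cKs | exact: neK0 zK0 | exact: (neKs _ _ _ Ks zKs i) |].
  move=> v; have := K i v; rewrite m1'.
  set a := supp_fun K0 v; set b := supp_fun _ (- v) => h.
  clear E inc K cbs cvs cv0.
  have : (a - b) ^+ 2 <= 0 by nra.
  rewrite -[(a - b) ^+ 2]/((a - b) * (a - b)) => h2.
  nra.
move=> [m1' eqK]; subst m.
apply/seteqP; split => // y /(polarE _ _ _ _ _ cK0 zK0 cKs zKs) hy.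
have [c0 ci2 _] := c_facts R 1.
exists (fun j => (Num.sqrt (1.+1%:R : R))^-1^-1 *: y j); last first.
  by apply: funext => j /=; rewrite scalerA mulfV ?scale1r // gt_eqF.
rewrite D2E (hQ_scale _ _ _ _ _ cK0 zK0 cKs zKs); last by rewrite ltW // invr_gt0.
rewrite ci2.
have ha : forall u, supp_fun K0 u = supp_fun (Ks ord0) (- u).
  by move=> u; rewrite (eqK ord0) supp_neg.
move: hy; rewrite /hA /hQ !big_ord1 -!ha.
have := supp_ge0 _ _ _ (y ord0) cK0 zK0.
set a := supp_fun K0 (y ord0) => a0 h.
nra.
Qed.
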